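(* Two measure-and-prepare instruments $\mathcal{I}\in\mathrm{Ins}(\Omega,\mathcal{H},\mathcal{K})$ and $\mathcal{J}\in\mathrm{Ins}(\Lambda,\mathcal{H},\mathcal{V})$ are compatible if and only if their induced POVMs $\mathsf{A}^{\mathcal{I}}$ and $\mathsf{A}^{\mathcal{J}}$ are compatible.
   Context: All Hilbert spaces are finite-dimensional and complex, and all outcome sets are finite. A POVM $\mathsf{A}\in\mathcal{O}(\Omega,\mathcal{H})$ is a map $x\mapsto\mathsf{A}(x)$ to positive operators with $\sum_x\mathsf{A}(x)=I$; POVMs $\mathsf{A}\in\mathcal{O}(\Omega,\mathcal{H})$, $\mathsf{B}\in\mathcal{O}(\Lambda,\mathcal{H})$ are compatible if there is $\mathsf{G}\in\mathcal{O}(\Omega\times\Lambda,\mathcal{H})$ with $\sum_x\mathsf{G}(x,y)=\mathsf{B}(y)$ and $\sum_y\mathsf{G}(x,y)=\mathsf{A}(x)$. An instrument $\mathcal{I}\in\mathrm{Ins}(\Omega,\mathcal{H},\mathcal{K})$ is a family $(\mathcal{I}_x)_{x\in\Omega}$ of completely positive trace-nonincreasing linear maps $\mathcal{L}(\mathcal{H})\to\mathcal{L}(\mathcal{K})$ whose sum is trace preserving; its induced POVM is given by $\mathrm{tr}[\mathsf{A}^{\mathcal{I}}(x)\varrho]=\mathrm{tr}[\mathcal{I}_x(\varrho)]$. It is measure-and-prepare if there are a POVM $\mathsf{A}$ and states $\{\xi_x\}$ on $\mathcal{K}$ with $\mathcal{I}_x(\varrho)=\mathrm{tr}[\mathsf{A}(x)\varrho]\xi_x$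 for all $x,\varrho$. Two instruments $\mathcal{I}\in\mathrm{Ins}(\Omega,\mathcal{H},\mathcal{K})$, $\mathcal{J}\in\mathrm{Ins}(\Lambda,\mathcal{H},\mathcal{V})$ are compatible if there is $\mathcal{G}\in\mathrm{Ins}(\Omega\times\Lambda,\mathcal{H},\mathcal{K}\otimes\mathcal{V})$ with $\sum_{x}\mathrm{tr}_{\mathcal{K}}[\mathcal{G}_{(x,y)}(\varrho)]=\mathcal{J}_y(\varrho)$ for all $y$ and $\sum_y\mathrm{tr}_{\mathcal{V}}[\mathcal{G}_{(x,y)}(\varrho)]=\mathcal{I}_x(\varrho)$ for all $x$, for all states $\varrho$. *)

(* Defs.v *)
From HB Require Import structures.
From mathcomp Require Import all_boot all_order all_algebra.
From mathcomp Require Import mxtens.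
Set Implicit Arguments. Unset Strict Implicit. Unset Printing Implicit Defensive.
Import Order.TTheory GRing.Theory Num.Theory.
Local Open Scope ring_scope.

Section Quantum.
Variable C : numClosedFieldType.

Definition adjmx (p q : nat) (X : 'M[C]_(p, q)) : 'M[C]_(q, p) :=
  map_mx Num.conj (X^T).

Definition psd (d : nat) (A : 'M[C]_d) : Prop :=
  A = adjmx A /\ forall v : 'cV[C]_d, 0 <= (adjmx v *m A *m v) 0 0.

Definition state (d : nat) (rho : 'M[C]_d) : Prop := psd rho /\ \tr rho = 1.

Definition povm (Om : finType) (d : nat) (A : Om -> 'M[C]_d) : Prop :=
  (forall x, psd (A x)) /\ \sum_(x : Om) A x = 1%:M.

Definition povm_compatible (Om La : finType) (d : nat)
    (A : Om -> 'M[C]_d) (B : La -> 'M[C]_d) : Prop :=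
  exists G : (Om * La)%type -> 'M[C]_d,
    povm G /\
    (forall y, \sum_(x : Om) G (x, y) = B y) /\
    (forall x, \sum_(y : La) G (x, y) = A x).

(* Tensor-product index convention: 'I_(k * n) ~ 'I_k * 'I_n via mxtens_index. *)
Definition blockmx (k n : nat) (X : 'M[C]_(k * n)) (i j : 'I_k) : 'M[C]_n :=
  \matrix_(a, b) X (mxtens_index (i, a)) (mxtens_index (j, b)).

(* id_k (x) Phi *)
Definition ampl (k n m : nat) (Phi : 'M[C]_n -> 'M[C]_m) (X : 'M[C]_(k * n))
  : 'M[C]_(k * m) :=
  \matrix_(p, q) Phi (blockmx X (mxtens_unindex p).1 (mxtens_unindex q).1)
                    (mxtens_unindex p).2 (mxtens_unindex q).2.

Definition completely_positive (n m : nat) (Phi : 'M[C]_n -> 'M[C]_m) : Prop :=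
  forall (k : nat) (X : 'M[C]_(k * n)), psd X -> psd (ampl Phi X).

Definition trace_nonincreasing (n m : nat) (Phi : 'M[C]_n -> 'M[C]_m) : Prop :=
  forall rho : 'M[C]_n, psd rho -> \tr (Phi rho) <= \tr rho.

Definition instrument (Om : finType) (n m : nat)
    (I : Om -> 'M[C]_n -> 'M[C]_m) : Prop :=
  (forall x, linear (I x)) /\
  (forall x, completely_positive (I x)) /\
  (forall x, trace_nonincreasing (I x)) /\
  (forall rho : 'M[C]_n, \tr (\sum_(x : Om) I x rho) = \tr rho).

Definition induced_povm (Om : finType) (n m : nat)
    (I : Om -> 'M[C]_n -> 'M[C]_m) (A : Om -> 'M[C]_n) : Prop :=
  povm A /\ forall x (rho : 'M[C]_n), state rho -> \tr (A x *m rho) = \tr (I x rho).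

Definition measure_and_prepare (Om : finType) (n m : nat)
    (I : Om -> 'M[C]_n -> 'M[C]_m) : Prop :=
  instrument I /\
  exists (A : Om -> 'M[C]_n) (xi : Om -> 'M[C]_m),
    povm A /\ (forall x, state (xi x)) /\
    forall x (rho : 'M[C]_n), I x rho = \tr (A x *m rho) *: xi x.

Definition ptrace1 (m p : nat) (Y : 'M[C]_(m * p)) : 'M[C]_p :=
  \matrix_(b, c) \sum_(a < m) Y (mxtens_index (a, b)) (mxtens_index (a, c)).
Definition ptrace2 (m p : nat) (Y : 'M[C]_(m * p)) : 'M[C]_m :=
  \matrix_(a, c) \sum_(b < p) Y (mxtens_index (a, b)) (mxtens_index (c, b)).

Definition instrument_compatible (Om La : finType) (n m p : nat)
    (I : Om -> 'M[C]_n -> 'M[C]_m) (J : La -> 'M[C]_n -> 'M[C]_p) : Prop :=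
  exists G : (Om * La)%type -> 'M[C]_n -> 'M[C]_(m * p),
    instrument G /\
    (forall rho : 'M[C]_n, state rho ->
       (forall y, \sum_(x : Om) ptrace1 (G (x, y) rho) = J y rho) /\
       (forall x, \sum_(y : La) ptrace2 (G (x, y) rho) = I x rho)).

End Quantum.

(* Main.v *)
Require Import Defs.
From HB Require Import structures.
From mathcomp Require Import all_boot all_order all_algebra.
From mathcomp Require Import mxtens ring lra.
Set Implicit Arguments. Unset Strict Implicit. Unset Printing Implicit Defensive.
Import Order.TTheory GRing.Theory Num.Theory Num.Def.
Local Open Scope ring_scope.

Section H.
Variable C : numClosedFieldType.

Lemma adjE (p q : nat) (X : 'M[C]_(p, q)) i j : adjmx X i j = (X j i)^*.
Proof. by rewrite !mxE. Qed.

Lemma adjmxK (p q : nat) (X : 'M[C]_(p, q)) : adjmx (adjmx X) = X.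
Proof. by apply/matrixP=> i j; rewrite !adjE conjCK. Qed.

Lemma adjmxD (p q : nat) (X Y : 'M[C]_(p, q)) : adjmx (X + Y) = adjmx X + adjmx Y.
Proof. by apply/matrixP=> i j; rewrite !mxE rmorphD. Qed.

Lemma adjmxZ (p q : nat) c (X : 'M[C]_(p, q)) : adjmx (c *: X) = c^* *: adjmx X.
Proof. by apply/matrixP=> i j; rewrite !mxE rmorphM. Qed.

Lemma adjmxB (p q : nat) (X Y : 'M[C]_(p, q)) : adjmx (X - Y) = adjmx X - adjmx Y.
Proof. by apply/matrixP=> i j; rewrite !mxE rmorphB. Qed.

Lemma adjmxM (p q r : nat) (X : 'M[C]_(p, q)) (Y : 'M[C]_(q, r)) :
  adjmx (X *m Y) = adjmx Y *m adjmx X.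
Proof.
apply/matrixP=> i j; rewrite !mxE rmorph_sum; apply: eq_bigr => k _.
by rewrite !mxE rmorphM mulrC.
Qed.

Lemma adj_delta (p q : nat) (i : 'I_p) (j : 'I_q) : adjmx (delta_mx i j : 'M[C]_(p,q)) = delta_mx j i.
Proof. apply/matrixP=> a b; rewrite !mxE. by case: eqP; case: eqP=> /= _ _; rewrite ?rmorph0 ?rmorph1. Qed.

Definition qf (d : nat) (A : 'M[C]_d) (v : 'cV[C]_d) := (adjmx v *m A *m v) 0 0.

Lemma qfE (d : nat) (A : 'M[C]_d) v :
  qf A v = \sum_a \sum_b (v a 0)^* * A a b * v b 0.
Proof.
rewrite /qf mxE (exchange_big) /=; apply: eq_bigr => b _.
rewrite mxE big_distrl /=; apply: eq_bigr => a _; by rewrite !mxE.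
Qed.

Lemma qf_delta (d : nat) (A : 'M[C]_d) i j :
  (adjmx (delta_mx i 0 : 'cV[C]_d) *m A *m (delta_mx j 0 : 'cV[C]_d)) 0 0 = A i j.
Proof.
by rewrite adj_delta -rowE -colE !mxE.
Qed.

Lemma quad_zero (d : nat) (D : 'M[C]_d) : (forall v, qf D v = 0) -> D = 0.
Proof.
move=> H; apply/matrixP=> i j; rewrite mxE.
have E a b c : qf D (delta_mx a 0 + c *: delta_mx b 0) =
   D a a + c * D a b + c^* * D b a + c^* * c * D b b.
  have qd a' b' : \sum_k (adjmx (delta_mx a' 0 : 'cV[C]_d) *m D) 0 k * (delta_mx b' 0 : 'cV[C]_d) k 0 = D a' b'.
    by rewrite -qf_delta [in RHS]mxE.
  rewrite /qf adjmxD adjmxZ !(mulmxDl, mulmxDr) -!scalemxAl -!scalemxAr.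
  by rewrite !mxE !qd; ring.
have Eii := E i j 0; rewrite H rmorph0 !mul0r !addr0 in Eii.
have Ejj := E j i 0; rewrite H rmorph0 !mul0r !addr0 in Ejj.
have E1 := E i j 1; rewrite H rmorph1 !mul1r -Eii -Ejj add0r addr0 in E1.
have Ei := E i j 'i; rewrite H conjCi -Eii -Ejj mulr0 add0r addr0 in Ei.
have : 'i * (D i j *+ 2) = 0.
  have Dji : D j i = - D i j by apply/eqP; rewrite -addr_eq0 addrC -E1.
  rewrite Dji in Ei; rewrite [RHS]Ei; ring.
move/eqP; rewrite mulf_eq0 (negPf (neq0Ci C)) /= mulrn_eq0 /=.
by move/eqP.
Qed.

Lemma qf_adj (d : nat) (A : 'M[C]_d) v : qf (adjmx A) v = (qf A v)^*.
Proof.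
by rewrite /qf -adjE !adjmxM adjmxK mulmxA.
Qed.

Lemma subE (a b : nat) (X Y : 'M[C]_(a, b)) i j : (X - Y) i j = X i j - Y i j.
Proof. by rewrite !mxE. Qed.

Lemma psd_of_qf (d : nat) (A : 'M[C]_d) : (forall v, 0 <= qf A v) -> psd A.
Proof.
move=> H; split=> //; apply/eqP; rewrite -subr_eq0; apply/eqP/quad_zero => v.
rewrite /qf mulmxBr mulmxBl subE -/(qf A v) -/(qf (adjmx A) v) qf_adj.
by have /CrealP -> := ger0_real (H v); rewrite subrr.
Qed.

Lemma psd_qf (d : nat) (A : 'M[C]_d) v : psd A -> 0 <= qf A v.
Proof. by case=> _ /(_ v). Qed.

Definition gram (L : finType) (d : nat) (f : L -> 'I_d -> C) : 'M[C]_d :=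
  \matrix_(p, q) \sum_l f l p * (f l q)^*.

Lemma psd_gram (L : finType) (d : nat) (f : L -> 'I_d -> C) : psd (gram f).
Proof.
apply: psd_of_qf => v; rewrite qfE.
have -> : \sum_a \sum_b (v a 0)^* * gram f a b * v b 0 =
   \sum_l (\sum_a (v a 0)^* * f l a) * (\sum_a (v a 0)^* * f l a)^*.
  rewrite (eq_bigr (fun a => \sum_b \sum_l (v a 0)^* * f l a * ((v b 0)^* * f l b)^*)); last first.
    move=> a _; apply: eq_bigr => b _; rewrite mxE big_distrr big_distrl /=.
    apply: eq_bigr => l _; rewrite rmorphM /= (conjCK (v b 0)). ring.
  rewrite (eq_bigr (fun a => \sum_l \sum_b (v a 0)^* * f l a * ((v b 0)^* * f l b)^*)); last first.
    by move=> a _; rewrite exchange_big.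
  rewrite exchange_big /=; apply: eq_bigr => l _.
  rewrite big_distrl /=; apply: eq_bigr => a _.
  by rewrite rmorph_sum big_distrr /=.
by apply: sumr_ge0 => l _; exact: mul_conjC_ge0.
Qed.


Lemma tcE (a b : nat) (M : 'M[C]_(a, b)) : map_mx conjC (M^T) = adjmx M.
Proof. by []. Qed.

Lemma psd_gram_ex (d : nat) (A : 'M[C]_d) : psd A ->
  exists f : 'I_d -> 'I_d -> C, A = gram f.
Proof.
move=> hA; have [hH _] := hA.
have N : A \is normalmx by rewrite qualifE /= tcE -hH.
have := orthomx_spectralP N.
set P := spectralmx A; set sp := spectral_diag A => EA.
have U : P *m adjmx P = 1%:M by apply/unitarymxP; exact: spectral_unitarymx.
rewrite invmx_unitary ?spectral_unitarymx // tcE in EA.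
have sp_ge0 l : 0 <= sp 0 l.
  have := psd_qf (adjmx P *m delta_mx l 0) hA.
  rewrite /qf adjmxM adjmxK adj_delta EA !mulmxA.
  rewrite -(mulmxA _ P (adjmx P)) U mulmx1 -(mulmxA _ P (adjmx P)) U mulmx1.
  by rewrite -rowE -colE !mxE eqxx mulr1n.
exists (fun l p => sqrtC (sp 0 l) * (P l p)^*).
apply/matrixP=> p q; rewrite EA !mxE; apply: eq_bigr => l _.
rewrite mul_mx_diag !mxE rmorphM /= (conjCK (P l q)).
have : sqrtC (sp 0 l) * sqrtC (sp 0 l) = sp 0 l by rewrite -expr2 sqrtCK.
have sg : 0 <= sqrtC (sp 0 l) by rewrite sqrtC_ge0.
have /CrealP E := ger0_real sg.
move=> E2; rewrite E -[in LHS]E2; ring.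
Qed.

Lemma tr1 (M : 'M[C]_1) : \tr M = M 0 0.
Proof. by rewrite /mxtrace big_ord1. Qed.

Lemma qf_tr (d : nat) (A : 'M[C]_d) v : qf A v = \tr (A *m (v *m adjmx v)).
Proof. by rewrite /qf -tr1 -mulmxA mxtrace_mulC mulmxA. Qed.

Lemma gram_sum (L : finType) (d : nat) (f : L -> 'I_d -> C) :
  gram f = \sum_l (\col_p f l p) *m adjmx (\col_p f l p).
Proof.
apply/matrixP=> p q; rewrite summxE !mxE; apply: eq_bigr => l _.
by rewrite !mxE big_ord1 !mxE.
Qed.

Lemma outer_gram (d : nat) (v : 'cV[C]_d) : v *m adjmx v = gram (fun (_ : unit) p => v p 0).
Proof.
apply/matrixP=> p q; rewrite !mxE big_ord1 (big_pred1 tt) // !mxE.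
by have -> : ord0 = 0 :> 'I_1 by apply: val_inj.
Qed.

Lemma psd_outer (d : nat) (v : 'cV[C]_d) : psd (v *m adjmx v).
Proof. rewrite outer_gram; exact: psd_gram. Qed.

Lemma qfZ (d : nat) c (A : 'M[C]_d) v : qf (c *: A) v = c * qf A v.
Proof. by rewrite /qf -scalemxAr -scalemxAl mxE. Qed.

Lemma psd_scale (d : nat) c (A : 'M[C]_d) : 0 <= c -> psd A -> psd (c *: A).
Proof.
move=> c0 hA; apply: psd_of_qf => v; rewrite qfZ; apply: mulr_ge0 => //.
exact: psd_qf.
Qed.

Lemma psd_diag (d : nat) (A : 'M[C]_d) i : psd A -> 0 <= A i i.
Proof. by move=> hA; have := psd_qf (delta_mx i 0) hA; rewrite /qf qf_delta. Qed.

Lemma psd_tr (d : nat) (A : 'M[C]_d) : psd A -> 0 <= \tr A.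
Proof. by move=> hA; apply: sumr_ge0 => i _; exact: psd_diag. Qed.

Lemma tr_mul_psd (d : nat) (P Y : 'M[C]_d) : psd P -> psd Y -> 0 <= \tr (P *m Y).
Proof.
move=> hP /psd_gram_ex [g ->]; rewrite gram_sum mulmx_sumr raddf_sum /=.
by apply: sumr_ge0 => l _; rewrite -qf_tr; exact: psd_qf.
Qed.

Lemma eq_on_states (d : nat) (A B : 'M[C]_d) :
  (forall rho, state rho -> \tr (A *m rho) = \tr (B *m rho)) -> A = B.
Proof.
move=> H; apply/eqP; rewrite -subr_eq0; apply/eqP/quad_zero => v.
have [->|v0] := eqVneq v 0.
  by rewrite /qf mulmx0 mxE.
set r := (adjmx v *m v) 0 0.
have rE : r = \sum_i v i 0 * (v i 0)^*.
  by rewrite /r mxE; apply: eq_bigr => i _; rewrite !mxE mulrC.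
have r0 : 0 <= r by rewrite rE; apply: sumr_ge0 => i _; exact: mul_conjC_ge0.
have rn0 : r != 0.
  apply: contra v0; rewrite rE => /eqP/psumr_eq0P H0.
  apply/eqP/matrixP => i j; rewrite (ord1 j) mxE; apply/eqP.
  by rewrite -mul_conjC_eq0 H0 // => k _; exact: mul_conjC_ge0.
have st : state (r^-1 *: (v *m adjmx v)).
  split; first by apply: psd_scale; [rewrite invr_ge0 | exact: psd_outer].
  by rewrite mxtraceZ mxtrace_mulC tr1 -/r mulVf.
have := H _ st; rewrite -!scalemxAr !mxtraceZ -!qf_tr => /eqP.
rewrite -subr_eq0 -mulrBr mulf_eq0 invr_eq0 (negPf rn0) /= => /eqP E.
by rewrite /qf mulmxBr mulmxBl subE.
Qed.

Lemma sum_idx (a b : nat) (F : 'I_(a * b) -> C) :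
  \sum_p F p = \sum_i \sum_j F (mxtens_index (i, j)).
Proof.
rewrite pair_bigA /= (reindex (@mxtens_index a b)) /=.
  by apply: eq_bigr => -[i j] _.
by exists (@mxtens_unindex a b) => x _; [exact: mxtens_indexK | exact: mxtens_unindexK].
Qed.

Definition tens (a b : nat) (X : 'M[C]_a) (Y : 'M[C]_b) : 'M[C]_(a * b) :=
  \matrix_(i, j) (X (mxtens_unindex i).1 (mxtens_unindex j).1 *
                  Y (mxtens_unindex i).2 (mxtens_unindex j).2).

Lemma tensE (a b : nat) (X : 'M[C]_a) (Y : 'M[C]_b) i j i' j' :
  tens X Y (mxtens_index (i, j)) (mxtens_index (i', j')) = X i i' * Y j j'.
Proof. by rewrite mxE !mxtens_indexK. Qed.

Lemma psd_tens (a b : nat) (X : 'M[C]_a) (Y : 'M[C]_b) : psd X -> psd Y -> psd (tens X Y).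
Proof.
move=> /psd_gram_ex [f ->] /psd_gram_ex [g ->].
have -> : tens (gram f) (gram g) = gram (fun l p => f l.1 (mxtens_unindex p).1 * g l.2 (mxtens_unindex p).2).
  apply/matrixP=> p q; rewrite !mxE big_distrlr pair_bigA /=.
  apply: eq_bigr => -[l1 l2] _ /=; rewrite rmorphM /=; ring.
exact: psd_gram.
Qed.

Lemma ptrace1_tens (a b : nat) (X : 'M[C]_a) (Y : 'M[C]_b) : ptrace1 (tens X Y) = \tr X *: Y.
Proof.
apply/matrixP=> i j; rewrite !mxE big_distrl /=; apply: eq_bigr => k _.
by rewrite tensE.
Qed.

Lemma ptrace2_tens (a b : nat) (X : 'M[C]_a) (Y : 'M[C]_b) : ptrace2 (tens X Y) = \tr Y *: X.
Proof.
apply/matrixP=> i j; rewrite !mxE big_distrl /=; apply: eq_bigr => k _.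
by rewrite tensE mulrC.
Qed.

Lemma tr_ptrace1 (a b : nat) (Y : 'M[C]_(a * b)) : \tr (ptrace1 Y) = \tr Y.
Proof.
rewrite /mxtrace sum_idx exchange_big /=; apply: eq_bigr => j _.
by rewrite mxE.
Qed.

Lemma tr_ptrace2 (a b : nat) (Y : 'M[C]_(a * b)) : \tr (ptrace2 Y) = \tr Y.
Proof.
rewrite /mxtrace sum_idx /=; apply: eq_bigr => j _.
by rewrite mxE.
Qed.

Lemma tr_tens (a b : nat) (X : 'M[C]_a) (Y : 'M[C]_b) : \tr (tens X Y) = \tr X * \tr Y.
Proof. by rewrite -tr_ptrace1 ptrace1_tens mxtraceZ. Qed.

Lemma ptrace1Z (a b : nat) c (Y : 'M[C]_(a * b)) : ptrace1 (c *: Y) = c *: ptrace1 Y.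
Proof.
apply/matrixP=> i j; rewrite !mxE big_distrr /=; apply: eq_bigr => k _.
by rewrite mxE.
Qed.

Lemma ptrace2Z (a b : nat) c (Y : 'M[C]_(a * b)) : ptrace2 (c *: Y) = c *: ptrace2 Y.
Proof.
apply/matrixP=> i j; rewrite !mxE big_distrr /=; apply: eq_bigr => k _.
by rewrite mxE.
Qed.

Lemma ex4 (I1 I2 I3 I4 : finType) (F : I1 -> I2 -> I3 -> I4 -> C) :
 \sum_a \sum_b \sum_c \sum_d F a b c d = \sum_d \sum_c \sum_a \sum_b F a b c d.
Proof.
under eq_bigr => a _ do under eq_bigr => b _ do rewrite exchange_big.
under eq_bigr => a _ do rewrite exchange_big.
rewrite exchange_big.
under eq_bigr => d _ do under eq_bigr => a _ do rewrite exchange_big.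
by under eq_bigr => d _ do rewrite exchange_big.
Qed.

Lemma mp_CP (n m : nat) (P : 'M[C]_n) (S : 'M[C]_m) : psd P -> psd S ->
  completely_positive (fun rho : 'M[C]_n => \tr (P *m rho) *: S).
Proof.
move=> hP hS k X hX.
have [pi EP] := psd_gram_ex hP; have [sg ES] := psd_gram_ex hS.
have [chi EX] := psd_gram_ex hX.
pose al t r i := \sum_e (pi t e)^* * chi r (mxtens_index (i, e)).
suff -> : ampl (fun rho : 'M[C]_n => \tr (P *m rho) *: S) X =
  gram (fun (l : ('I_n * 'I_(k * n)) * 'I_m) p =>
          al l.1.1 l.1.2 (mxtens_unindex p).1 * sg l.2 (mxtens_unindex p).2).
  exact: psd_gram.
apply/matrixP=> p q; rewrite /ampl !mxE.
move: (mxtens_unindex p) (mxtens_unindex q) => [i a] [j b] /=.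
have -> : \sum_l al l.1.1 l.1.2 i * sg l.2 a * (al l.1.1 l.1.2 j * sg l.2 b)^* =
   \sum_x \sum_s (al x.1 x.2 i * (al x.1 x.2 j)^*) * (sg s a * (sg s b)^*).
  rewrite pair_bigA; apply: eq_bigr => -[x s] _ /=; rewrite rmorphM /=; ring.
rewrite -big_distrlr /= ES mxE; congr (_ * _).
rewrite -(pair_bigA _ (fun t r => al t r i * (al t r j)^*)) /=.
rewrite /mxtrace.
transitivity (\sum_c \sum_e \sum_t \sum_r
   (pi t c * (pi t e)^*) * (chi r (mxtens_index (i, e)) * (chi r (mxtens_index (j, c)))^*)).
  apply: eq_bigr => c _; rewrite mxE; apply: eq_bigr => e _.
  by rewrite EP EX !mxE big_distrlr.
rewrite -ex4; apply: eq_bigr => t _; apply: eq_bigr => r _.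
rewrite /al rmorph_sum big_distrlr /=; apply: eq_bigr => e _; apply: eq_bigr => c _.
rewrite rmorphM /= (conjCK (pi t c)); ring.
Qed.

Section Lin.
Variables (n m : nat) (f : 'M[C]_n -> 'M[C]_m).
Hypothesis hf : linear f.

Lemma lin0 : f 0 = 0.
Proof.
move: (hf 1 0 0); rewrite !scale1r addr0 => h.
by apply/(addrI (f 0)); rewrite addr0 -h.
Qed.

Lemma linD u v : f (u + v) = f u + f v.
Proof. by have := hf 1 u v; rewrite !scale1r. Qed.

Lemma linZ a u : f (a *: u) = a *: f u.
Proof. by have := hf a u 0; rewrite !addr0 lin0 addr0. Qed.

Lemma lin_sum (I : finType) (F : I -> 'M[C]_n) : f (\sum_i F i) = \sum_i f (F i).
Proof. exact: (big_morph f linD lin0). Qed.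
End Lin.

Lemma CP_tr_ge0 (n m : nat) (Phi : 'M[C]_n -> 'M[C]_m) (Y : 'M[C]_n) :
  completely_positive Phi -> psd Y -> 0 <= \tr (Phi Y).
Proof.
move=> hCP hY; have [f EY] := psd_gram_ex hY.
pose X : 'M[C]_(1 * n) := \matrix_(p, q) Y (mxtens_unindex p).2 (mxtens_unindex q).2.
have hX : psd X.
  have -> : X = gram (fun l p => f l (mxtens_unindex p).2).
    by apply/matrixP=> p q; rewrite !mxE EY mxE.
  exact: psd_gram.
have hA := hCP 1%N X hX.
have EB : blockmx X 0 0 = Y by apply/matrixP=> a b; rewrite !mxE !mxtens_indexK.
apply: sumr_ge0 => a _.
have := psd_diag (mxtens_index ((0 : 'I_1), a)) hA.
by rewrite mxE mxtens_indexK /= EB.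
Qed.

Definition dualmx (n m : nat) (Phi : 'M[C]_n -> 'M[C]_m) : 'M[C]_n :=
  \matrix_(i, j) \tr (Phi (delta_mx j i)).

Lemma tr_dual (n m : nat) (Phi : 'M[C]_n -> 'M[C]_m) rho : linear Phi ->
  \tr (dualmx Phi *m rho) = \tr (Phi rho).
Proof.
move=> hl; rewrite [in RHS](matrix_sum_delta rho) (lin_sum hl) raddf_sum /=.
rewrite [LHS]/mxtrace (eq_bigr (fun i => \sum_j \tr (Phi (delta_mx j i)) * rho j i)); last first.
  by move=> i _; rewrite mxE; apply: eq_bigr => j _; rewrite mxE.
rewrite exchange_big /=; apply: eq_bigr => j _; rewrite (lin_sum hl) raddf_sum /=.
by apply: eq_bigr => i _; rewrite (linZ hl) mxtraceZ mulrC.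
Qed.

Lemma psd_dual (n m : nat) (Phi : 'M[C]_n -> 'M[C]_m) : linear Phi ->
  completely_positive Phi -> psd (dualmx Phi).
Proof.
move=> hl hCP; apply: psd_of_qf => v; rewrite qf_tr tr_dual //.
exact/CP_tr_ge0/psd_outer.
Qed.

Lemma tr_summ (I : finType) (d : nat) (M : I -> 'M[C]_d) rho :
  \tr ((\sum_i M i) *m rho) = \sum_i \tr (M i *m rho).
Proof. by rewrite mulmx_suml raddf_sum. Qed.
End H.

Unset Implicit Arguments.

Theorem proposition9 (C : numClosedFieldType) (Om La : finType) (n m p : nat)
    (I : Om -> 'M[C]_n -> 'M[C]_m) (J : La -> 'M[C]_n -> 'M[C]_p)
    (AI : Om -> 'M[C]_n) (AJ : La -> 'M[C]_n) :
  measure_and_prepare I -> measure_and_prepare J ->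
  induced_povm I AI -> induced_povm J AJ ->
  (instrument_compatible I J <-> povm_compatible AI AJ).
Proof.
move=> [instI [A [xi [povA [stxi EI]]]]] [instJ [B [eta [povB [steta EJ]]]]].
move=> [povAI indI] [povAJ indJ].
split.
- move=> [G [[lin [cp [tni tp]]] marg]].
  exists (fun xy => dualmx (G xy)); split; [split|split].
  + by move=> xy; apply: psd_dual.
  + apply: eq_on_states => rho _; rewrite tr_summ mul1mx.
    under eq_bigr => xy _ do rewrite tr_dual //.
    by rewrite -raddf_sum /= tp.
  + move=> y; apply: eq_on_states => rho st; rewrite tr_summ indJ //.
    have [my _] := marg rho st; rewrite -my raddf_sum /=.
    by apply: eq_bigr => x _; rewrite tr_dual // tr_ptrace1.
  + move=> x; apply: eq_on_states => rho st; rewrite tr_summ indI //.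
    have [_ mx] := marg rho st; rewrite -mx raddf_sum /=.
    by apply: eq_bigr => y _; rewrite tr_dual // tr_ptrace2.
- move=> [Gp [[psdG sumG] [mY mX]]].
  exists (fun xy rho => \tr (Gp xy *m rho) *: tens (xi xy.1) (eta xy.2)).
  have trT x y : \tr (tens (xi x) (eta y)) = 1.
    by rewrite tr_tens (proj2 (stxi x)) (proj2 (steta y)) mulr1.
  split; [split; [|split; [|split]]|].
  + move=> xy a u v /=.
    by rewrite mulmxDr -scalemxAr mxtraceD mxtraceZ scalerDl scalerA.
  + move=> xy; apply: mp_CP; first exact: psdG.
    by apply: psd_tens; [exact: (proj1 (stxi _)) | exact: (proj1 (steta _))].
  + move=> xy rho hr; rewrite mxtraceZ trT mulr1.
    have -> : \tr rho = \sum_xy' \tr (Gp xy' *m rho) by rewrite -tr_summ sumG mul1mx.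
    rewrite (bigD1 xy) //= lerDl; apply: sumr_ge0 => xy' _.
    exact: tr_mul_psd.
  + move=> rho; rewrite raddf_sum /=.
    under eq_bigr => xy _ do rewrite mxtraceZ trT mulr1.
    by rewrite -tr_summ sumG mul1mx.
  + move=> rho st; split.
    * move=> y; under eq_bigr => x _ do rewrite /= ptrace1Z ptrace1_tens (proj2 (stxi x)) scale1r.
      rewrite -scaler_suml -tr_summ mY indJ // EJ mxtraceZ (proj2 (steta y)) mulr1.
      done.
    * move=> x; under eq_bigr => y _ do rewrite /= ptrace2Z ptrace2_tens (proj2 (steta y)) scale1r.
      rewrite -scaler_suml -tr_summ mX indI // EI mxtraceZ (proj2 (stxi x)) mulr1.
      done.
Qed.
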